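(* We have $$\sum_{k=0}^\infty\frac{(30k-7)(-2)^k}{\binom{4k}{2k}}=-\frac{3\pi+64}{6}.$$ *)

(* Defs.v *)
From Stdlib Require Import Reals.
From Coquelicot Require Import Coquelicot.
Open Scope R_scope.

Definition cor_term (k : nat) : R :=
  (30 * INR k - 7) * (-2) ^ k / Binomial.C (4 * k) (2 * k).

(* Main.v *)
Require Import Defs.
From Stdlib Require Import Reals Lra Lia.
From Coquelicot Require Import Coquelicot.
Open Scope R_scope.

Lemma RInt_lin (f g : R -> R) (a b If Ig al be : R) :
  is_RInt f a b If -> is_RInt g a b Ig ->
  is_RInt (fun x => al * f x + be * g x) a b (al * If + be * Ig).
Proof.
  intros Hf Hg.
  apply (is_RInt_plus (fun x => al * f x) (fun x => be * g x)).
  - apply (is_RInt_scal f a b al If Hf).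
  - apply (is_RInt_scal g a b be Ig Hg).
Qed.

Lemma RInt_val (f : R -> R) (a b I1 I2 : R) : I1 = I2 -> is_RInt f a b I1 -> is_RInt f a b I2.
Proof. intros ->; auto. Qed.

Lemma RInt_fun (f g : R -> R) (a b I : R) : (forall x, f x = g x) -> is_RInt f a b I -> is_RInt g a b I.
Proof. intros H; apply is_RInt_ext; intros; auto. Qed.

Definition w (u : R) := /4 - u^2.

Lemma Jstep (m : nat) (v : R) : is_RInt (fun u => w u ^ m) (-1/2) (1/2) v ->
  is_RInt (fun u => w u ^ S m) (-1/2) (1/2) ((INR m + 1)/2 * v / (2 * INR m + 3)).
Proof.
  intros H.
  set (G := fun u => u * w u ^ S m).
  set (dG := fun u => w u ^ S m - 2 * u^2 * (INR m + 1) * w u ^ m).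
  assert (HG : is_RInt dG (-1/2) (1/2) (minus (G (1/2)) (G (-1/2)))).
  { apply (is_RInt_derive G dG).
    - intros x _. unfold G, dG, w. auto_derive; [auto|].
      change (match m with 0%nat => 1 | S _ => INR m + 1 end) with (INR (S m)). rewrite S_INR. unfold Rminus. replace (x^2) with (x*(x*1)) by ring. generalize (/4 + - (x*(x*1))). intros W. simpl pow. generalize (W^m). intros Z. ring.
    - intros x _. apply (ex_derive_continuous dG). unfold dG, w. auto_derive. auto. }
  assert (E : minus (G (1/2)) (G (-1/2)) = 0).
  { unfold G, w, minus, plus, opp; simpl. field. }
  rewrite E in HG.
  pose proof (RInt_lin _ _ _ _ _ _ (/(2*INR m+3)) ((INR m+1)/2/(2*INR m+3)) HG H) as K.
  eapply RInt_val; [|eapply RInt_fun; [|exact K]].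
  - field. pose proof (pos_INR m); lra.
  - intros x. unfold dG. cbv beta. simpl pow. generalize (w x ^ m); intros Z.
    unfold w. field. pose proof (pos_INR m); lra.
Qed.

Lemma Cstep (m : nat) : Binomial.C (2 * S m) (S m) =
  Binomial.C (2 * m) m * (2 * INR m + 2) * (2 * INR m + 1) / (INR m + 1)^2.
Proof.
  unfold Binomial.C.
  replace (2 * S m - S m)%nat with (S m) by lia.
  replace (2 * m - m)%nat with m by lia.
  replace (2 * S m)%nat with (S (S (2 * m))) by lia.
  rewrite !fact_simpl, !mult_INR, !S_INR, mult_INR, S_INR. simpl (INR 2).
  pose proof (INR_fact_neq_0 m). pose proof (INR_fact_neq_0 (2*m)). pose proof (pos_INR m).
  simpl (INR 1). set (a := INR (Factorial.fact (2 * m))). set (b := INR (Factorial.fact m)). field. repeat split; try assumption; lra.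
Qed.

Lemma C_pos n k : (k <= n)%nat -> 0 < Binomial.C n k.
Proof.
  intros. unfold Binomial.C. apply Rdiv_lt_0_compat. apply INR_fact_lt_0.
  apply Rmult_lt_0_compat; apply INR_fact_lt_0.
Qed.

Lemma Jval (n : nat) : is_RInt (fun u => w u ^ n) (-1/2) (1/2)
   (/ (INR (2 * n + 1) * Binomial.C (2 * n) n)).
Proof.
  induction n.
  - eapply RInt_val; [|eapply RInt_fun; [|apply (is_RInt_const (-1/2) (1/2) (1:R))]].
    + unfold Binomial.C; simpl. unfold scal; simpl. unfold mult; simpl. field.
    + intros; simpl; auto.
  - eapply RInt_val; [|apply Jstep; exact IHn].
    rewrite Cstep. pose proof (C_pos (2*n) n ltac:(lia)).
    replace (2 * S n + 1)%nat with (S (S (2 * n + 1))) by lia.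
    rewrite !S_INR, plus_INR, mult_INR. simpl (INR 2). simpl (INR 1).
    pose proof (pos_INR n). field. repeat split; lra.
Qed.

Definition yv (u : R) := -2 * (w u)^2.
Definition pk (k : nat) := (30 * INR k - 7) * (4 * INR k + 1).
Definition tm (k : nat) := (30 * INR k - 7) * (-2) ^ k / Binomial.C (4 * k) (2 * k).

Lemma term_int k : is_RInt (fun u => pk k * yv u ^ k) (-1/2) (1/2) (tm k).
Proof.
  pose proof (Jval (2 * k)) as H.
  replace (2 * (2 * k))%nat with (4 * k)%nat in H by lia.
  pose proof (is_RInt_scal _ _ _ (pk k * (-2)^k) _ H) as K.
  eapply RInt_val; [|eapply RInt_fun; [|exact K]].
  - change (scal (pk k * (-2)^k) (/ (INR (4*k+1) * Binomial.C (4*k) (2*k)))) with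
      ((pk k * (-2)^k) * / (INR (4*k+1) * Binomial.C (4*k) (2*k))).
    unfold tm, pk.
    pose proof (C_pos (4*k) (2*k) ltac:(lia)).
    rewrite plus_INR, mult_INR. simpl (INR 4). simpl (INR 1).
    pose proof (pos_INR k). generalize ((-2)^k); intros Z.
    set (c := Binomial.C (4*k) (2*k)) in *.
    field. split; lra.
  - intros x. change (scal (pk k * (-2)^k) (w x ^ (2*k)) = pk k * yv x ^ k).
    change (pk k * (-2)^k * (w x ^ (2*k)) = pk k * yv x ^ k). unfold yv.
    rewrite pow_mult, Rpow_mult_distr. ring.
Qed.

Fixpoint Sp (n : nat) : R := match n with 0%nat => 0 | S n => Sp n + tm n end.
Fixpoint hs (n : nat) (y : R) : R := match n with 0%nat => 0 | S n => hs n y + pk n * y ^ n end.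

Lemma Sp_int n : is_RInt (fun u => hs n (yv u)) (-1/2) (1/2) (Sp n).
Proof.
  induction n.
  - eapply RInt_val; [|eapply RInt_fun; [|apply (is_RInt_const (-1/2) (1/2) (0:R))]].
    + unfold scal; simpl; unfold mult; simpl. ring.
    + intros; simpl; auto.
  - pose proof (RInt_lin _ _ _ _ _ _ 1 1 IHn (term_int n)) as K.
    eapply RInt_val; [|eapply RInt_fun; [|exact K]].
    + simpl; ring.
    + intros; simpl; ring.
Qed.

Definition Aa (y : R) := 111 * y^2 + 136 * y - 7.
Definition Bb (n : nat) (y : R) := 120 * y * (1 + y) + (240 * INR n + 2) * y * (1 - y)
   + (120 * INR n ^ 2 + 2 * INR n - 7) * (1 - y)^2.

Lemma hs_closed n y : y <= 0 -> hs n y = (Aa y - y ^ n * Bb n y) / (1 - y)^3.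
Proof.
  intros Hy. induction n.
  - simpl. unfold Aa, Bb. simpl. field. lra.
  - simpl hs. rewrite IHn. unfold Aa, Bb, pk. rewrite S_INR. simpl pow.
    generalize (y ^ n). intros Z. field. lra.
Qed.

Definition Ff (u : R) := Aa (yv u) / (1 - yv u)^3.

Lemma yv_range u : -1/2 <= u <= 1/2 -> -1/8 <= yv u <= 0.
Proof.
  intros H. unfold yv, w.
  assert (0 <= /4 - u^2 <= 1/4) by nra. nra.
Qed.

Lemma sq_le_4pow n : (INR n + 1)^2 <= 4 ^ n.
Proof.
  induction n.
  - simpl. lra.
  - rewrite S_INR. simpl pow. simpl pow in IHn. pose proof (pos_INR n). nra.
Qed.

Lemma diff_bound n u : -1/2 <= u <= 1/2 -> Rabs (Ff u - hs n (yv u)) <= 1000 * (1/2)^n.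
Proof.
  intros Hu. pose proof (yv_range u Hu) as Hy.
  set (y := yv u) in *. unfold Ff. rewrite hs_closed by lra. fold y.
  replace (Aa y / (1 - y) ^ 3 - (Aa y - y ^ n * Bb n y) / (1 - y) ^ 3)
    with (y ^ n * (Bb n y / (1 - y) ^ 3)) by (field; lra).
  rewrite Rabs_mult, <- RPow_abs.
  assert (H1 : Rabs y ^ n <= (1/8)^n).
  { apply pow_incr. split; [apply Rabs_pos|]. rewrite Rabs_left1 by lra. lra. }
  assert (H2 : Rabs (Bb n y / (1 - y) ^ 3) <= 1000 * (INR n + 1)^2).
  { assert (Hd : 1 <= (1 - y)^3) by nra.
    rewrite Rabs_div by lra. rewrite (Rabs_right ((1-y)^3)) by lra.
    apply Rle_trans with (Rabs (Bb n y)).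
    { apply Rmult_le_reg_r with ((1-y)^3); [lra|]. unfold Rdiv. rewrite Rmult_assoc, Rinv_l by lra.
      pose proof (Rabs_pos (Bb n y)). nra. }
    pose proof (pos_INR n) as Hn. unfold Bb. set (m := INR n) in *.
    assert (Ha : -1 <= y * (1 + y) <= 0) by nra.
    assert (Hb : -1 <= y * (1 - y) <= 0) by nra.
    assert (Hc : 1 <= (1 - y)^2 <= 2) by nra.
    set (a := y * (1 + y)) in *. set (b := y * (1 - y)) in *. set (c := (1 - y)^2) in *.
    assert (Hq : 0 <= 120 * m^2 + 2 * m) by nra.
    assert (E1 : -(240*m+2) <= (240 * m + 2) * b <= 0) by nra.
    assert (E2 : 0 <= (120 * m^2 + 2 * m) * c <= 2 * (120 * m^2 + 2 * m)) by nra.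
    replace (120 * y * (1 + y)) with (120 * a) by (unfold a; ring).
    replace ((240 * m + 2) * y * (1 - y)) with ((240 * m + 2) * b) by (unfold b; ring).
    replace ((120 * m ^ 2 + 2 * m - 7) * c) with ((120 * m^2 + 2*m) * c - 7 * c) by ring.
    apply Rabs_le. split; nra. }
  pose proof (sq_le_4pow n).
  replace (1000 * (1/2)^n) with ((1/8)^n * (1000 * 4^n)).
  2: { rewrite <- Rmult_assoc, (Rmult_comm ((1/8)^n)), Rmult_assoc, <- Rpow_mult_distr.
       replace (1/8 * 4) with (1/2) by field. ring. }
  apply Rmult_le_compat.
  - apply pow_le, Rabs_pos.
  - apply Rabs_pos.
  - exact H1.
  - apply Rle_trans with (1 := H2). lra.
Qed.

Definition Qq (u : R) := 16 * u^4 - 8 * u^2 + 9.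
Definition Pp (u : R) := -3476/3 * u + 9200/3 * u^3 - 13760/3 * u^5 - 256 * u^7.
Definition Gg (u : R) := Pp u / (Qq u)^2 - atan (4 * u / (3 - 4 * u^2)).

Lemma Gder u : -1/2 <= u <= 1/2 -> is_derive Gg u (Ff u).
Proof.
  intros Hu.
  assert (HQ : 0 < 16 * u^4 - 8 * u^2 + 9) by nra.
  assert (H3 : 0 < 3 - 4 * u^2) by nra.
  unfold Gg, Pp, Qq. auto_derive.
  - repeat split; nra.
  - unfold Ff, Aa, yv, w.
    assert (0 < 1 + (4 * u / (3 - 4 * u^2))^2) by nra.
    field. repeat split; try nra.
Qed.

Lemma Fint : is_RInt Ff (-1/2) (1/2) (- (3 * PI + 64) / 6).
Proof.
  eapply RInt_val; [| apply (is_RInt_derive Gg Ff)].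
  - unfold minus, plus, opp; simpl. unfold Gg, Pp, Qq.
    replace (4 * (1/2) / (3 - 4 * (1/2)^2)) with 1 by field.
    replace (4 * (-1/2) / (3 - 4 * (-1/2)^2)) with (-1) by field.
    assert (Hm : atan (-1) = - (PI/4)) by (rewrite <- atan_1, <- atan_opp; f_equal; ring). rewrite Hm, atan_1. field.
  - intros x Hx. apply Gder. rewrite Rmin_left, Rmax_right in Hx by lra. exact Hx.
  - intros x Hx. rewrite Rmin_left, Rmax_right in Hx by lra.
    apply (ex_derive_continuous Ff). unfold Ff, Aa, yv, w.
    pose proof (yv_range x Hx) as Hy. unfold yv, w in Hy.
    auto_derive. assert (0 < 1 - -2 * (/4 - x^2)^2) by lra. simpl in *. nra.
Qed.

Lemma one_int : is_RInt (fun _ => 1) (-1/2) (1/2) 1.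
Proof.
  eapply RInt_val; [|apply (is_RInt_const (-1/2) (1/2) (1:R))].
  unfold scal; simpl; unfold mult; simpl. field.
Qed.

Lemma Sp_bound n : Rabs (Sp n - (- (3 * PI + 64) / 6)) <= 1000 * (1/2)^n.
Proof.
  set (e := 1000 * (1/2)^n). set (L := - (3 * PI + 64) / 6).
  assert (Hp := RInt_lin _ _ _ _ _ _ 1 e Fint one_int).
  assert (Hm := RInt_lin _ _ _ _ _ _ 1 (-e) Fint one_int).
  apply Rabs_le. split.
  - assert (L - e <= Sp n); [|lra].
    replace (L - e) with (1 * L + - e * 1) by (unfold L; ring).
    eapply is_RInt_le; [| exact Hm | exact (Sp_int n) |]; [lra|].
    intros x Hx. pose proof (diff_bound n x ltac:(lra)). apply Rabs_le_between in H. cbv beta. unfold e. lra.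
  - assert (Sp n <= L + e); [|lra].
    replace (L + e) with (1 * L + e * 1) by (unfold L; ring).
    eapply is_RInt_le; [| exact (Sp_int n) | exact Hp |]; [lra|].
    intros x Hx. pose proof (diff_bound n x ltac:(lra)). apply Rabs_le_between in H. cbv beta. unfold e. lra.
Qed.

Lemma sum_Sp n : sum_n tm n = Sp (S n).
Proof.
  induction n.
  - rewrite sum_O. simpl. ring.
  - rewrite sum_Sn, IHn. reflexivity.
Qed.

Theorem corollary1p2 :
  is_series (fun k : nat => (30 * INR k - 7) * (-2) ^ k / Binomial.C (4 * k) (2 * k))
    (- (3 * PI + 64) / 6).
Proof.
  change (is_series tm (- (3 * PI + 64) / 6)).
  set (L := - (3 * PI + 64) / 6).
  assert (H : is_lim_seq (sum_n tm) L).
  { apply is_lim_seq_ext with (fun n => Sp (S n)).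
    { intros n; rewrite sum_Sp; reflexivity. }
    apply (is_lim_seq_incr_1 Sp L).
    apply is_lim_seq_le_le with (fun n => L - 1000 * (1/2)^n) (fun n => L + 1000 * (1/2)^n).
    - intros n. pose proof (Sp_bound n). apply Rabs_le_between in H. unfold L. lra.
    - replace (Finite L) with (Finite (L - 1000 * 0)) by (f_equal; ring).
      apply is_lim_seq_minus'; [apply is_lim_seq_const|].
      apply is_lim_seq_mult'; [apply is_lim_seq_const|]. apply is_lim_seq_geom. rewrite Rabs_right; lra.
    - replace (Finite L) with (Finite (L + 1000 * 0)) by (f_equal; ring).
      apply is_lim_seq_plus'; [apply is_lim_seq_const|].
      apply is_lim_seq_mult'; [apply is_lim_seq_const|]. apply is_lim_seq_geom. rewrite Rabs_right; lra. }
  exact H.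
Qed.
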